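(* Let $p \geq 3$ and $q \geq 2$ be integers and let $L$ be the Laplacian of the graph $K_p \oplus C_q$. Then the spectrum of $L$ consists of the eigenvalue $p$ with multiplicity $p-2$, a simple eigenvalue $\lambda \in (p,p+2]$, and $q$ eigenvalues (counted with multiplicity) in the interval $[0,4]$, which include the simple eigenvalue $0$.
   Context: For integers $p \geq 3$, $q \geq 2$, the graph $K_p \oplus C_q$ has vertex set $\{-p+1,\ldots,0\} \cup \{1,\ldots,q-1\}$ (so $p+q-1$ vertices). Its edges are: every pair of distinct vertices in $\{-p+1,\ldots,0\}$, the edge $\{0,1\}$, and the edges $\{j,j+1\}$ for $1 \leq j \leq q-2$. The Laplacian $L$ is the matrix with $L_{ii}$ equal to the degree of vertex $i$, $L_{ij}=-1$ if $i\neq j$ are adjacent and $0$ otherwise. *)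

(* Defs.v *)
From mathcomp Require Import all_boot all_order all_algebra.
Set Implicit Arguments. Unset Strict Implicit. Unset Printing Implicit Defensive.
Import Order.TTheory GRing.Theory Num.Theory.
Local Open Scope ring_scope.

(* Vertex v of K_p (+) C_q (v in {-p+1,...,0} u {1,...,q-1}) is encoded as the
   index v + p - 1 in 'I_(p + q - 1): clique vertices are 0..p-1 (vertex 0 of
   the paper is index p-1), path vertices j are indices j + p - 1. *)
Definition KC_adj (p : nat) (i j : nat) : bool :=
  (i != j) &&
  (((i < p) && (j < p))%N ||
   ((p - 1 <= minn i j)%N && ((i == j.+1) || (j == i.+1)))).

Definition laplacian (R : pzRingType) (n : nat) (adj : rel 'I_n) : 'M[R]_n :=
  \matrix_(i, j) (if i == j then (#|[set k | adj i k]|)%:R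
                  else if adj i j then -1 else 0).

Definition KC_laplacian (R : pzRingType) (p q : nat) : 'M[R]_(p + q - 1) :=
  laplacian R (fun i j : 'I_(p + q - 1) => KC_adj p i j).

(* Main.v *)
Require Import Defs.
From mathcomp Require Import all_boot all_order all_algebra.
From mathcomp Require Import zify ring lra.
Set Implicit Arguments. Unset Strict Implicit. Unset Printing Implicit Defensive.
Import Order.TTheory GRing.Theory Num.Theory.
Local Open Scope ring_scope.

Lemma count_card n (P : pred nat) : #|[set k : 'I_n | P k]| = count P (iota 0 n).
Proof.
rewrite -sum1_card (eq_bigl (fun k : 'I_n => P k)); last by move=> k; rewrite inE.
by rewrite -(big_mkord P (fun _ => 1%N)) sum1_count /index_iota subn0.
Qed.

Lemma count_seq n (P : pred nat) (S : seq nat) : uniq S -> all (fun x => x < n)%N S ->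
  (forall k, (k < n)%N -> P k = (k \in S)) -> count P (iota 0 n) = size S.
Proof.
move=> uS aS hP.
rewrite -size_filter; apply: perm_size; apply: uniq_perm => //.
  by apply: filter_uniq; apply: iota_uniq.
move=> k; rewrite mem_filter mem_iota add0n leq0n /=.
case: (ltnP k n) => hk; first by rewrite andbT hP.
by rewrite andbF; apply/esym/negP => /(allP aS); rewrite ltnNge hk.
Qed.

Definition degf (p q i : nat) : nat :=
  if (i < p.-1)%N then p.-1 else if i == p.-1 then p
  else if i == (p + q).-2 then 1%N else 2%N.

Lemma deg_KC p q (i : nat) : (3 <= p)%N -> (2 <= q)%N -> (i < p + q - 1)%N ->
  count (KC_adj p i) (iota 0 (p + q - 1)) = degf p q i.
Proof.
move=> hp hq hi; rewrite /degf.
have mr : forall x k, k \in rem x (iota 0 p) = (k != x) && (k < p)%N.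
  by move=> x k; rewrite (mem_rem_uniq _ (iota_uniq 0 p)) inE mem_iota.
case: (ltnP i p.-1) => h1.
  rewrite (@count_seq _ _ (rem i (iota 0 p))).
  - by rewrite size_rem ?mem_iota ?size_iota //; lia.
  - by apply: rem_uniq; apply: iota_uniq.
  - by apply/allP => x; rewrite mr => /andP[_ h]; lia.
  - by move=> k hk; rewrite mr /KC_adj; lia.
case: eqP => h2.
  rewrite (@count_seq _ _ (p :: rem i (iota 0 p))).
  - by rewrite /= size_rem ?mem_iota ?size_iota //; lia.
  - by rewrite /= rem_uniq ?iota_uniq // mr; lia.
  - by apply/allP => x; rewrite inE mr => /orP[/eqP ->|/andP[_ h]]; lia.
  - by move=> k hk; rewrite inE mr /KC_adj; lia.
case: eqP => h3.
  rewrite (@count_seq _ _ [:: i.-1]) //.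
  - by rewrite /= andbT; lia.
  - by move=> k hk; rewrite !inE /KC_adj; lia.
rewrite (@count_seq _ _ [:: i.-1; i.+1]) //.
- by rewrite /= inE andbT; lia.
- by rewrite /= andbT; apply/andP; split; lia.
- by move=> k hk; rewrite !inE /KC_adj; lia.
Qed.

Section MatPart.
Variable R : rcfType.

Definition Mf (p q : nat) (i j : nat) : {poly R} :=
  if i == j then 'X - ((degf p q i)%:R)%:P else if KC_adj p i j then 1 else 0.

Lemma char_Mf p q : (3 <= p)%N -> (2 <= q)%N ->
  char_poly_mx (KC_laplacian R p q) = \matrix_(i, j) Mf p q i j.
Proof.
move=> hp hq; apply/matrixP => i j; rewrite !mxE /Mf.
case: (eqVneq i j) => [<-|nij].
  rewrite eqxx mulr1n count_card deg_KC //.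
have -> : (nat_of_ord i == nat_of_ord j) = false by apply/negbTE.
rewrite mulr0n sub0r; case: (KC_adj p i j) => /=.
  by rewrite polyCN opprK polyC1.
by rewrite polyC0 oppr0.
Qed.

End MatPart.

Section Det.
Variable R : comRingType.

Definition Dm (m : nat) (F : nat -> nat -> R) : R :=
  \det (\matrix_(i < m, j < m) F i j).

Lemma Dm_ext m F G : (forall i j, (i < m)%N -> (j < m)%N -> F i j = G i j) ->
  Dm m F = Dm m G.
Proof.
by move=> h; rewrite /Dm; congr (\det _); apply/matrixP => i j; rewrite !mxE h.
Qed.

Lemma Dm_row0 m F : (forall j, (0 < j)%N -> F 0%N j = 0) ->
  Dm m.+1 F = F 0%N 0%N * Dm m (fun i j => F i.+1 j.+1).
Proof.
move=> h; rewrite /Dm (expand_det_row _ ord0) big_ord_recl mxE.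
rewrite big1 ?addr0; last by move=> j _; rewrite mxE h ?mul0r.
rewrite /cofactor /= expr0 mul1r; congr (_ * \det _).
by apply/matrixP => i j; rewrite !mxE.
Qed.

Lemma Dm_tri m F : (forall j, (1 < j)%N -> F 0%N j = 0) ->
  (forall i, (1 < i)%N -> F i 0%N = 0) ->
  Dm m.+2 F = F 0%N 0%N * Dm m.+1 (fun i j => F i.+1 j.+1)
              - F 0%N 1%N * F 1%N 0%N * Dm m (fun i j => F i.+2 j.+2).
Proof.
move=> h0 h1; rewrite /Dm (expand_det_row _ ord0) !big_ord_recl.
rewrite big1 ?addr0; last by move=> j _; rewrite mxE h0 ?mul0r.
rewrite !mxE /=; congr (_ + _).
  rewrite /cofactor /= expr0 mul1r; congr (_ * \det _).
  by apply/matrixP => i j; rewrite !mxE.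
rewrite /cofactor /= expr1 (expand_det_col _ ord0) big_ord_recl.
rewrite big1 ?addr0; last by move=> i _; rewrite !mxE h1 ?mul0r.
rewrite !mxE /= /cofactor /= expr0 mul1r.
have -> : \det (row' ord0 (col' ord0 (row' ord0 (col' (lift ord0 ord0)
            (\matrix_(i < m.+2, j < m.+2) F i j))))) =
          \det (\matrix_(i < m, j < m) F i.+2 j.+2).
  by congr (\det _); apply/matrixP => i j; rewrite !mxE.
ring.
Qed.

Lemma Dm_strip s m F a : (forall i j, (i < s)%N -> F i j = if j == i then a else 0) ->
  Dm (s + m) F = a ^+ s * Dm m (fun i j => F (i + s)%N (j + s)%N).
Proof.
elim: s F => [|s IH] F h.
  by rewrite add0n expr0 mul1r; apply: Dm_ext => i j _ _; rewrite !addn0.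
rewrite addSn Dm_row0; last by move=> j hj; rewrite h //; case: j hj.
rewrite h // eqxx (IH (fun i j => F i.+1 j.+1)); last first.
  by move=> i j hi; rewrite h ?eqSS.
rewrite exprS mulrA; congr (_ * _); apply: Dm_ext => i j _ _.
by rewrite !addnS.
Qed.

End Det.

Section PolyPart.
Variable R : rcfType.

Fixpoint Qp (k : nat) : {poly R} :=
  match k with
  | 0 => 1
  | k1.+1 => match k1 with
             | 0 => 'X - 1%:P
             | k2.+1 => ('X - 2%:P) * Qp k1 - Qp k2
             end
  end.

Lemma QpSS k : Qp k.+2 = ('X - 2%:P) * Qp k.+1 - Qp k.
Proof. by []. Qed.

Lemma monic_subl (A B : {poly R}) :
  A \is monic -> (size B < size A)%N -> (A - B \is monic) /\ size (A - B) = size A.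
Proof.
move=> mA hs; have hs' : (size (- B) < size A)%N by rewrite size_opp.
split; last by rewrite size_addl.
by rewrite monicE lead_coefDl // -monicE.
Qed.

Lemma Qp_size k : Qp k \is monic /\ size (Qp k) = k.+1.
Proof.
have H : forall n, (Qp n \is monic /\ size (Qp n) = n.+1) /\
                   (Qp n.+1 \is monic /\ size (Qp n.+1) = n.+2).
  clear k; elim=> [|k [[m0 s0] [m1 s1]]].
    split; first by rewrite monic1 size_poly1.
    by rewrite /= monicXsubC size_XsubC.
  split; first by [].
  have mA : ('X - 2%:P) * Qp k.+1 \is monic by rewrite monicMl ?monicXsubC.
  have sA : size (('X - 2%:P) * Qp k.+1) = k.+3.
    by rewrite size_Mmonic ?monicXsubC ?size_XsubC ?s1 // -size_poly_eq0 size_XsubC.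
  rewrite QpSS; have [] := monic_subl mA (_ : (size (Qp k) < size (('X - 2%:P) * Qp k.+1)%R)%N).
    by rewrite sA s0.
  by move=> -> ->.
by case: (H k).
Qed.

Lemma Qp_at0 k : (Qp k).[0] = (-1) ^+ k.
Proof.
have H : forall n, (Qp n).[0] = (-1) ^+ n /\ (Qp n.+1).[0] = (-1) ^+ n.+1.
  elim=> [|n [h0 h1]]; first by rewrite /= !hornerE; split => //; ring.
  split => //; rewrite QpSS !hornerE h0 h1 !exprS; ring.
by case: (H k).
Qed.

Lemma Qp_at4 k : (Qp k).[4] = 2 * k%:R + 1.
Proof.
have H : forall n, (Qp n).[4] = 2 * n%:R + 1 /\ (Qp n.+1).[4] = 2 * n.+1%:R + 1.
  elim=> [|n [h0 h1]]; first by rewrite /= !hornerE; split => //; ring.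
  split => //; rewrite QpSS !hornerE h0 h1 -[n.+2]addn2 -[n.+1]addn1 !natrD; ring.
by case: (H k).
Qed.

Lemma Qp_ge x k : 4 <= x -> 1 <= (Qp k).[x] <= (Qp k.+1).[x].
Proof.
move=> hx; elim: k => [|k /andP[h0 h1]].
  by rewrite /= !hornerE; apply/andP; split; lra.
rewrite QpSS !hornerE; apply/andP; split; first lra.
nra.
Qed.

Fixpoint alt (P : {poly R}) (ts : seq R) : Prop :=
  match ts with
  | [::] => True
  | t :: ts' => 0 < (-1) ^+ size ts' * P.[t] /\ alt P ts'
  end.

Fixpoint ilv (t : R) (ts ss : seq R) : bool :=
  match ts, ss with
  | [::], [::] => true
  | t' :: ts', s :: ss' => [&& t < s, s < t' & ilv t' ts' ss']
  | _, _ => false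
  end.

Lemma ilv_size t ts ss : ilv t ts ss -> size ss = size ts.
Proof.
by elim: ts t ss => [|t' ts IH] t [|s ss] //= /and3P[_ _ /IH ->].
Qed.

Lemma ilv_path t ts ss : ilv t ts ss -> path <%R t ss.
Proof.
elim: ts t ss => [|t' ts IH] t [|s ss] //= /and3P[h1 h2 H].
rewrite h1 /=; have := IH _ _ H.
by case: ss H => //= s' ss' _ /andP[h3 ->]; rewrite (lt_trans h2 h3).
Qed.

Lemma ilv_lb t ts ss : ilv t ts ss -> all (fun s => t < s) ss.
Proof. by move/ilv_path; apply: order_path_min; apply: lt_trans. Qed.

Lemma ilv_ub t ts ss M : all (fun x => x <= M) ts -> ilv t ts ss ->
  all (fun s => s < M) ss.
Proof.
elim: ts t ss => [|t' ts IH] t [|s ss] //= /andP[h1 h2] /and3P[_ h3 H].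
by rewrite (lt_le_trans h3 h1) (IH _ _ h2 H).
Qed.

Lemma ilv_rcons t rs B ss : ilv t (rs ++ [:: B]) ss ->
  exists ss' s, [/\ ss = rcons ss' s, ilv t rs ss', last t rs < s & s < B].
Proof.
elim: rs t ss => [|r rs IH] t [|s ss] //=.
  case: ss => [|? ?] /=; last by rewrite !andbF.
  by move=> /and3P[h1 h2 _]; exists [::], s.
move=> /and3P[h1 h2 /IH [ss' [s' [-> H1 H2 H3]]]].
by exists (s :: ss'), s'; rewrite /= h1 h2 H1.
Qed.

Lemma last_lt (t M : R) rs : t < M -> all (fun x => x < M) rs -> last t rs < M.
Proof. by elim: rs t => //= r rs IH t _ /andP[h1 h2]; apply: IH. Qed.

Lemma ivt_strict (P : {poly R}) a b : a < b -> P.[a] * P.[b] < 0 ->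
  exists2 x, a < x < b & root P x.
Proof.
move=> ab hp.
have [x /andP[h1 h2] rx] : exists2 x, a <= x <= b & root P x.
  case: (ltrP P.[a] 0) => ha.
    apply: poly_ivt; first exact: ltW.
    by rewrite (ltW ha) /=; nra.
  have [x hx rx] : exists2 x, a <= x <= b & root (- P) x.
    apply: poly_ivt; first exact: ltW.
    by rewrite !hornerN oppr_le0 ha /= oppr_ge0; nra.
  by exists x; rewrite // -rootN.
exists x => //; move/eqP: rx => rx.
rewrite !lt_neqAle h1 h2 !andbT; apply/andP; split; apply/eqP => e; subst x.
  by move: hp; rewrite rx mul0r ltxx.
by move: hp; rewrite rx mulr0 ltxx.
Qed.

Lemma sgn2 n : (-1) ^+ n * (-1) ^+ n = 1 :> R.
Proof. by rewrite -exprMn mulrNN mulr1 expr1n. Qed.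

Lemma split_core (P : {poly R}) t ts : path <%R t ts -> alt P (t :: ts) ->
  exists ss, [/\ ilv t ts ss, all (root P) ss & uniq ss].
Proof.
elim: ts t => [|t' ts IH] t /=; first by move=> _ _; exists [::].
move=> /andP[htt hp] [ha [hb hc]].
have [ss [H1 H2 H3]] := IH t' hp (conj hb hc).
have [s /andP[s1 s2] rs] : exists2 s, t < s < t' & root P s.
  apply: ivt_strict => //.
  have e : P.[t] * P.[t'] = - (((-1) ^+ (size ts).+1 * P.[t]) * ((-1) ^+ size ts * P.[t']))
    by transitivity (P.[t] * P.[t'] * ((-1) ^+ size ts * (-1) ^+ size ts)); [rewrite sgn2 mulr1 | rewrite exprS; ring].
  by rewrite e oppr_lt0; apply: mulr_gt0.
exists (s :: ss); split => //=; rewrite ?s1 ?s2 ?H1 ?rs ?H2 ?H3 ?andbT //=.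
apply/negP => /(allP (ilv_lb H1)) hs.
by move: (lt_trans s2 hs); rewrite ltxx.
Qed.

Lemma split_pts (P : {poly R}) t ts : P \is monic -> size P = (size ts).+1 ->
  path <%R t ts -> alt P (t :: ts) ->
  exists ss, P = \prod_(s <- ss) ('X - s%:P) /\ ilv t ts ss.
Proof.
move=> mP sP hp ha.
have [ss [H1 H2 H3]] := split_core hp ha.
have hu : uniq_roots ss by rewrite uniq_rootsE.
have [Q eQ] := uniq_roots_prod_XsubC H2 hu.
exists ss; split => //.
have Q0 : Q != 0 by apply: contraTneq mP => Q0; rewrite eQ Q0 mul0r monicE lead_coef0 eq_sym oner_eq0.
have sQ : size Q = 1%N.
  move: sP; rewrite eQ size_Mmonic ?monic_prod_XsubC // size_prod_XsubC (ilv_size H1).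
  by rewrite addnS /= => h; move: h; set a := size Q; set b := size ts; lia.
have lQ : lead_coef Q = 1.
  by move/monicP: mP; rewrite eQ lead_coef_Mmonic ?monic_prod_XsubC.
move/eqP: sQ => /size_poly1P [c _ eQc].
by rewrite eQ eQc; move: lQ; rewrite eQc lead_coefC => ->; rewrite mul1r.
Qed.


Lemma alt_app (P Q : {poly R}) rs B : alt Q rs ->
  (forall r, r \in rs -> P.[r] = - Q.[r]) -> 0 < P.[B] -> alt P (rs ++ [:: B]).
Proof.
elim: rs => [|r rs IH] /=; first by move=> _ _ hB; rewrite expr0 mul1r.
move=> [h1 h2] hP hB; split; last first.
  by apply: IH => // x hx; apply: hP; rewrite inE hx orbT.
by rewrite size_cat /= addn1 exprS hP ?inE ?eqxx // mulN1r mulrNN.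
Qed.

Lemma prod_neg (xs : seq R) s : all (fun x => s < x) xs ->
  0 < (-1) ^+ size xs * \prod_(x <- xs) (s - x).
Proof.
elim: xs => [|x xs IH] /=; first by rewrite big_nil mulr1 expr0 ltr01.
move=> /andP[h1 h2]; rewrite big_cons.
have -> : (-1) ^+ (size xs).+1 * ((s - x) * \prod_(j <- xs) (s - j)) =
          (x - s) * ((-1) ^+ size xs * \prod_(j <- xs) (s - j)) by rewrite exprS; ring.
by apply: mulr_gt0; [rewrite subr_gt0 | apply: IH].
Qed.

Lemma prod_pos (ls : seq R) s : all (fun l => l < s) ls ->
  0 < \prod_(l <- ls) (s - l).
Proof.
move=> h; rewrite big_seq; apply: prodr_gt0 => l hl.
by rewrite subr_gt0; apply: (allP h).
Qed.

Lemma alt_prod (ls : seq R) t rs B ss : all (fun l => l <= t) ls -> path <%R t rs ->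
  ilv t (rs ++ [:: B]) ss -> alt (\prod_(r <- ls ++ rs) ('X - r%:P)) ss.
Proof.
elim: rs ls t ss => [|r rs IH] ls t [|s ss] //=.
  case: ss => [|? ?] /=; last by rewrite !andbF.
  move=> hl _ /and3P[h1 h2 _]; split => //; rewrite cats0 expr0 mul1r horner_prod.
  under eq_bigr do rewrite hornerXsubC.
  by apply: prod_pos; apply/allP => l /(allP hl) hlt; apply: le_lt_trans h1.
move=> hl /andP[htr hp] /and3P[h1 h2 H]; split; last first.
  rewrite -cat_rcons; apply: (IH _ r) => //.
  rewrite all_rcons lexx /=; apply/allP => l /(allP hl) hlt.
  by apply: ltW; apply: le_lt_trans (lt_trans h1 h2).
rewrite (ilv_size H) size_cat /= addn1 horner_prod.
under eq_bigr do rewrite hornerXsubC.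
rewrite big_cat big_cons /=.
set A := \prod_(_ <- ls) _; set Bp := \prod_(_ <- rs) _.
have hA : 0 < A.
  by apply: prod_pos; apply/allP => l /(allP hl) hlt; apply: le_lt_trans h1.
have hB : 0 < (-1) ^+ size rs * Bp.
  apply: prod_neg; apply/allP => x hx.
  have := order_path_min (@lt_trans _ _) hp; move/allP/(_ x hx) => hrx.
  exact: lt_trans h2 hrx.
have -> : (-1) ^+ (size rs).+1 * (A * ((s - r) * Bp)) =
          A * (r - s) * ((-1) ^+ size rs * Bp) by rewrite exprS; ring.
by apply: mulr_gt0 => //; apply: mulr_gt0 => //; rewrite subr_gt0.
Qed.

Lemma alt_trans (P Q : {poly R}) xs y z1 z2 : alt Q (xs ++ [:: y]) ->
  (forall x, x \in xs -> exists2 c, 0 < c & P.[x] = - (c * Q.[x])) ->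
  P.[z1] < 0 -> 0 < P.[z2] -> alt P (xs ++ [:: z1; z2]).
Proof.
elim: xs => [|x xs IH] /=.
  by move=> _ _ h1 h2; rewrite expr1 expr0 mul1r mulN1r oppr_gt0.
move=> [h1 h2] hP hz1 hz2; split; last first.
  by apply: IH => // u hu; apply: hP; rewrite inE hu orbT.
have [c c0 ->] := hP x (mem_head _ _).
move: h1; rewrite !size_cat /= addn1 addn2 => h1.
have -> : (-1) ^+ (size xs).+2 * - (c * Q.[x]) = c * ((-1) ^+ (size xs).+1 * Q.[x])
  by rewrite !exprS; ring.
exact: mulr_gt0.
Qed.

Lemma Qp_roots k : exists rs : seq R,
  [/\ size rs = k.+1, path <%R 0 rs, all (fun r => r < 4) rs,
      Qp k.+1 = \prod_(r <- rs) ('X - r%:P) & alt (Qp k) rs].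
Proof.
elim: k => [|k [rs [H1 H2 H3 H4 H5]]].
  exists [:: 1]; split => //.
  - by rewrite /= andbT ltr01.
  - by rewrite /= andbT; lra.
  - by rewrite big_seq1.
  - by split => //; rewrite /= expr0 mul1r hornerC ltr01.
have hroot : forall r, r \in rs -> (Qp k.+2).[r] = - (Qp k).[r].
  move=> r hr; rewrite QpSS !hornerE.
  have /eqP -> : root (Qp k.+1) r by rewrite H4 root_prod_XsubC.
  by rewrite mulr0 sub0r.
have hpath : path <%R 0 (rs ++ [:: 4]).
  by rewrite cat_path H2 /= andbT; apply: last_lt => //; lra.
have [mQ sQ] := Qp_size k.+2.
have halt : alt (Qp k.+2) (0 :: rs ++ [:: 4]).
  split.
    rewrite cats1 size_rcons H1 Qp_at0 sgn2; lra.
  apply: alt_app H5 hroot _; rewrite Qp_at4; have := ler0n R k.+2; lra.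
have hs : size (Qp k.+2) = (size (rs ++ [:: 4])).+1.
  by rewrite sQ cats1 size_rcons H1.
have [ss [E I]] := split_pts mQ hs hpath halt.
exists ss; split.
  - by rewrite (ilv_size I) size_cat H1 addn1.
  - exact: ilv_path I.
  - apply: ilv_ub I; rewrite all_cat; apply/andP; split; last by rewrite /= lexx.
    by apply/allP => x /(allP H3) /ltW.
  - exact: E.
  - by rewrite H4 -[rs]cat0s; apply: alt_prod I.
Qed.


End PolyPart.

Arguments Qp_roots {R} k.
Arguments Qp_size {R} k.
Arguments Qp_at0 {R} k.
Arguments Qp_at4 {R} k.
Arguments sgn2 {R} n.
Arguments QpSS {R} k.
Section PolyPart2.
Variable R : rcfType.
Local Notation Qp := (@Qp R).
Local Notation alt := (@alt R).
Local Notation ilv := (@ilv R).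
Definition Dp (p m' : nat) : {poly R} := ('X - (p%:R)%:P) * Qp m'.+1 - Qp m'.
Definition fp (p m' : nat) : {poly R} :=
  ('X - 1%:P) * Dp p m' - (p%:R - 1)%:P * Qp m'.+1.

Theorem f_roots (p m' : nat) : (3 <= p)%N -> (4 <= p)%N || (1 <= m')%N ->
  exists (lam : R) (s : seq R),
    [/\ p%:R < lam <= p%:R + 2, lam \notin s, size s = m'.+2,
        all (fun x => 0 <= x <= 4) s & count_mem 0 s = 1%N] /\
    fp p m' = ('X - lam%:P) * \prod_(x <- s) ('X - x%:P).
Proof.
move=> hp3 hpm.
set pR : R := p%:R.
have pR3 : 3 <= pR by rewrite /pR ler_nat.
have [rs [H1 H2 H3 H4 H5]] := @Qp_roots R m'.
have [mQ1 sQ1] := @Qp_size R m'.+1.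
have [mQ0 sQ0] := @Qp_size R m'.
have mA : ('X - pR%:P) * Qp m'.+1 \is monic by rewrite monicMl ?monicXsubC.
have sA : size (('X - pR%:P) * Qp m'.+1) = m'.+3.
  by rewrite size_Mmonic ?monicXsubC ?size_XsubC ?sQ1 // -size_poly_eq0 size_XsubC.
have [mD sD] : Dp p m' \is monic /\ size (Dp p m') = m'.+3.
  have [] := monic_subl mA (_ : (size (Qp m') < size (('X - pR%:P) * Qp m'.+1)%R)%N).
    by rewrite sA sQ0.
  by rewrite /Dp -/pR => -> ->.
have hrootD : forall r, r \in rs -> (Dp p m').[r] = - (Qp m').[r].
  move=> r hr; rewrite /Dp !(hornerD, hornerN, hornerM, hornerXsubC, hornerC, hornerX).
  have /eqP -> : root (Qp m'.+1) r by rewrite H4 root_prod_XsubC.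
  by rewrite mulr0 sub0r.
have hpathD : path <%R 0 (rs ++ [:: pR + 2]).
  rewrite cat_path H2 /= andbT; apply: last_lt; first lra.
  by apply/allP => x /(allP H3) hx; lra.
have haltD : alt (Dp p m') (0 :: rs ++ [:: pR + 2]).
  split.
    rewrite cats1 size_rcons H1 /Dp !(hornerD, hornerN, hornerM, hornerXsubC, hornerC, hornerX) !Qp_at0 -/pR.
    match goal with |- is_true (0 < ?t) =>
      have -> : t = (pR - 1) * ((-1) ^+ m' * (-1) ^+ m') by rewrite !exprS; ring end.
    rewrite sgn2; lra.
  apply: alt_app H5 hrootD _; rewrite /Dp !(hornerD, hornerN, hornerM, hornerXsubC, hornerC, hornerX) -/pR.
  have /andP[q0 q1] := @Qp_ge R (pR + 2) m' ltac:(lra).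
  nra.
have hsD : size (Dp p m') = (size (rs ++ [:: pR + 2])).+1.
  by rewrite sD cats1 size_rcons H1.
have [ds [ED ID]] := split_pts mD hsD hpathD haltD.
have aQ : alt (Qp m'.+1) ds by rewrite H4 -[rs]cat0s; apply: alt_prod ID.
have [ds' [dl [eds Id' _ _]]] := ilv_rcons ID.
have sds' : size ds' = m'.+1 by rewrite (ilv_size Id') H1.
have ds'lb := ilv_lb Id'.
have ds'path := ilv_path Id'.
have ds'ub : all (fun x => x < 4) ds'.
  by apply: ilv_ub Id'; apply/allP => x /(allP H3) /ltW.
have hDroot : forall x, x \in ds' -> (Dp p m').[x] = 0.
  by move=> x hx; apply/eqP; rewrite -/(root _ x) ED root_prod_XsubC eds mem_rcons inE hx orbT.
have f0 : (fp p m').[0] = 0.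
  rewrite /fp /Dp !(hornerD, hornerN, hornerM, hornerXsubC, hornerC, hornerX) !Qp_at0 !exprS; ring.
have /factor_theorem [g Eg] : root (fp p m') 0 by rewrite /root f0.
have mA2 : ('X - 1%:P) * Dp p m' \is monic by rewrite monicMl ?monicXsubC.
have sA2 : size (('X - 1%:P) * Dp p m') = m'.+4.
  by rewrite size_Mmonic ?monicXsubC ?size_XsubC ?sD // -size_poly_eq0 size_XsubC.
have [mf sf] : fp p m' \is monic /\ size (fp p m') = m'.+4.
  have hlt : (size ((p%:R - 1)%:P * Qp m'.+1)%R < size (('X - 1%:P) * Dp p m')%R)%N.
    rewrite mul_polyC sA2; apply: leq_ltn_trans (size_scale_leq _ _) _.
    by rewrite sQ1.
  have [] := monic_subl mA2 hlt.
  by rewrite /fp => -> ->.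
have g0 : g != 0.
  by apply: contraTneq mf => g0; rewrite Eg g0 mul0r monicE lead_coef0 eq_sym oner_eq0.
have mg : g \is monic.
  by move: mf; rewrite Eg monicE lead_coef_Mmonic ?monicXsubC // -monicE.
have sg : size g = m'.+3.
  move: sf; rewrite Eg size_Mmonic ?monicXsubC // size_XsubC addn2 /=.
  by case.
have hg : forall x, (fp p m').[x] = g.[x] * x.
  by move=> x; rewrite Eg hornerM hornerXsubC subr0.
case: ds' sds' eds Id' ds'lb ds'path ds'ub hDroot => // d0 ds'' sds' eds Id' ds'lb ds'path ds'ub hDroot.
have d0pos : 0 < d0 by move: ds'path => /= /andP[].
have haltg : alt g (d0 :: ds'' ++ [:: 4; pR + 2]).
  rewrite -cat_cons; apply: (alt_trans (Q := Qp m'.+1) (y := dl)).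
  - by rewrite cats1 -eds.
  - move=> x hx; have xpos : 0 < x by apply: (allP ds'lb).
    exists ((pR - 1) / x); first by apply: divr_gt0 => //; lra.
    have e1 := hg x; move: e1; rewrite /fp hornerD hornerM (hDroot x hx) !(hornerD, hornerN, hornerM, hornerXsubC, hornerC, hornerX) -/pR => e1.
    apply: (mulIf (lt0r_neq0 xpos)); rewrite -e1; field.
    by rewrite lt0r_neq0.
  - have := hg 4; rewrite /fp /Dp !(hornerD, hornerN, hornerM, hornerXsubC, hornerC, hornerX) !Qp_at4 -/pR => e4.
    have hm : 0 <= m'%:R :> R by rewrite ler0n.
    have hcase : 4 <= pR \/ 1 <= (m'%:R : R).
      by case/orP: hpm => h; [left; rewrite /pR | right]; rewrite ?ler_nat ?ler1n.
    rewrite -[m'.+1]addn1 natrD in e4.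
    case: hcase => hc; nra.
  - have := hg (pR + 2); rewrite /fp /Dp !(hornerD, hornerN, hornerM, hornerXsubC, hornerC, hornerX) -/pR => e.
    have /andP[q0 q1] := @Qp_ge R (pR + 2) m' ltac:(lra).
    nra.
have hpathg : path <%R d0 (ds'' ++ [:: 4; pR + 2]).
  rewrite cat_path; move: ds'path => /= /andP[_ ->] /=.
  rewrite andbT; apply/andP; split; last lra.
  by apply: last_lt; [move: ds'ub => /= /andP[] | move: ds'ub => /= /andP[]].
have hsg : size g = (size (ds'' ++ [:: 4; pR + 2])).+1.
  by rewrite sg size_cat /=; move: sds' => /= [->]; rewrite addn2.
have [es [Eg2 Ie]] := split_pts mg hsg hpathg haltg.
move: Ie; rewrite (_ : ds'' ++ [:: 4; pR + 2] = (ds'' ++ [:: 4]) ++ [:: pR + 2]); last by rewrite -catA.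
move=> /ilv_rcons [es' [lam [ees Ie' hl4 hlp]]].
move: hl4; rewrite cats1 last_rcons => hl4.
have es'lb := ilv_lb Ie'.
have es'ub : all (fun x => x < 4) es'.
  apply: ilv_ub Ie'; rewrite all_cat; apply/andP; split; last by rewrite /= lexx.
  by move: ds'ub => /= /andP[_ h]; apply/allP => x /(allP h) /ltW.
have es'pos : all (fun x => 0 < x) es'.
  by apply/allP => x /(allP es'lb) hx; apply: lt_trans hx.
have sz : size es' = m'.+1.
  by rewrite (ilv_size Ie') size_cat /= addn1; move: sds' => /= [->].
have gE : g = (\prod_(x <- es') ('X - x%:P)) * ('X - lam%:P).
  by rewrite Eg2 ees -cats1 big_cat big_seq1.
exists lam, (0 :: es'); split; last first.
  by rewrite Eg gE big_cons; ring.
split.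
- apply/andP; split; last lra.
  case: (leqP 4 p) => h4.
    case: (ltrP pR lam) => // hle.
    have hp4 : 4 <= pR by rewrite /pR ler_nat.
    have := hg pR; rewrite gE hornerM horner_prod hornerXsubC.
    under eq_bigr do rewrite hornerXsubC.
    rewrite /fp /Dp !(hornerD, hornerN, hornerM, hornerXsubC, hornerC, hornerX) -/pR.
    have hA : 0 < \prod_(x <- es') (pR - x).
      by apply: prod_pos; apply/allP => x /(allP es'ub) hx; lra.
    have /andP[q0 q1] := @Qp_ge R pR m' hp4.
    move: hA; set A := \prod_(x <- es') (pR - x) => hA e.
    have h0 : 0 <= A * (pR - lam) * pR.
      by apply: mulr_ge0; [apply: mulr_ge0 => //; [apply: ltW | rewrite subr_ge0] | lra].
    suff : False by [].
    nra.
  have e3 : p = 3%N by move: h4 hp3; clear; lia.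
  have : pR = 3 by rewrite /pR e3.
  lra.
- rewrite inE negb_or; apply/andP; split; first by apply/eqP => e; lra.
  by apply/negP => /(allP es'ub) h; lra.
- by rewrite /= sz.
- rewrite /= lexx /=; apply/andP; split; first lra.
  by apply/allP => x hx; rewrite ltW ?(allP es'pos) ?ltW ?(allP es'ub).
- rewrite /= eqxx; congr S; apply/count_memPn; apply/negP => /(allP es'pos).
  by rewrite ltxx.
Qed.

Lemma f_special : fp 3 0 = ('X - 4%:P) * \prod_(x <- [:: 0; 1]) ('X - x%:P).
Proof.
by rewrite /fp /Dp /= !big_cons big_nil !polyC0 !polyCB !polyC1 !polyC_natr; ring.
Qed.

End PolyPart2.

Section Main.
Variable R : rcfType.
Variables (p' q' : nat).
Local Notation p := p'.+3.
Local Notation q := q'.+2.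
Local Notation n := (p'.+3 + q'.+2 - 1)%N.
Local Notation c := p'.+1.
Local Notation M := (Mf R p q).

Definition Sf (i : nat) : {poly R} := \sum_(k < c) M i k.
Definition Gf (i j : nat) : {poly R} :=
  (M i j + (j == c)%:R * Sf i) - (i < c)%N%:R * (M c j + (j == c)%:R * Sf c).

Definition Nmx : 'M[{poly R}]_n := \matrix_(i, k) ((i < c)%N && (k == c :> nat))%:R.

Lemma hc : (c < n)%N. Proof. lia. Qed.
Let c0 : 'I_n := Ordinal hc.

Lemma det_1aN a : \det (1%:M + a *: Nmx) = 1.
Proof.
rewrite -det_tr det_trig.
  rewrite big1 // => i _; rewrite !mxE eqxx /=.
  have -> : ((i < c) && (i == c :> nat))%N = false by lia.
  by rewrite mulr0 addr0.
apply/is_trig_mxP => i j hij; rewrite !mxE.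
have -> : (j == i) = false by apply/negbTE; rewrite neq_ltn hij orbT.
have -> : ((j < c) && (i == c :> nat))%N = false by lia.
by rewrite mulr0 addr0.
Qed.

Lemma mulMN (F : nat -> nat -> {poly R}) i j :
  ((\matrix_(i0, j0) F i0 j0 : 'M_n) *m Nmx) i j = (j == c :> nat)%:R * \sum_(k < c) F i k.
Proof.
rewrite mxE; under eq_bigr do rewrite !mxE.
case: (j == c :> nat); last by rewrite mul0r big1 // => k _; rewrite andbF mulr0.
rewrite mul1r (big_ord_widen n (F i) (ltnW hc)) [RHS]big_mkcond /=.
by apply: eq_bigr => k _; rewrite andbT; case: (k < c)%N; rewrite ?mulr1 ?mulr0.
Qed.

Lemma mulNM (A : 'M_n) i j : (Nmx *m A) i j = (i < c)%N%:R * A c0 j.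
Proof.
rewrite mxE (bigD1 c0) //= big1 ?addr0; first by rewrite !mxE eqxx andbT.
move=> k hk; rewrite !mxE.
have -> : (k == c :> nat) = false by apply/negbTE; apply: contra hk => /eqP e; apply/eqP/val_inj.
by rewrite andbF mul0r.
Qed.

Lemma addmx_ij (A B : 'M[{poly R}]_n) i j : (A + B) i j = A i j + B i j.
Proof. by rewrite mxE. Qed.
Lemma submx_ij (A B : 'M[{poly R}]_n) i j : (A - B) i j = A i j - B i j.
Proof. by rewrite !mxE. Qed.

Lemma G_eq : (1%:M - Nmx) *m ((\matrix_(i, j) M i j) *m (1%:M + Nmx)) =
             \matrix_(i, j) Gf i j.
Proof.
apply/matrixP => i j.
rewrite mulmxBl mul1mx mulmxDr mulmx1 submx_ij mulNM !addmx_ij !mulMN.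
by rewrite !mxE /Gf /Sf.
Qed.

Lemma char_G : char_poly (KC_laplacian R p q) = Dm n Gf.
Proof.
rewrite /char_poly char_Mf // /Dm -G_eq !det_mulmx.
have -> : 1%:M - Nmx = 1%:M + (-1) *: Nmx by rewrite scaleN1r.
have -> : 1%:M + Nmx = 1%:M + 1 *: Nmx by rewrite scale1r.
by rewrite !det_1aN mul1r mulr1.
Qed.

End Main.

Section Main2.
Variable R : rcfType.
Variables (p' q' : nat).
Local Notation p := p'.+3.
Local Notation q := q'.+2.
Local Notation n := (p'.+3 + q'.+2 - 1)%N.
Local Notation c := p'.+1.
Local Notation M := (Mf R p q).
Local Notation S := (Sf R p' q').
Local Notation G := (Gf R p' q').

Lemma nb0 : (false%:R : {poly R}) = 0. Proof. by []. Qed.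
Lemma nb1 : (true%:R : {poly R}) = 1. Proof. by []. Qed.

Lemma M_off i j : i != j -> M i j = if KC_adj p i j then 1 else 0.
Proof. by rewrite /Mf => /negbTE ->. Qed.

Lemma M_one i j : i != j -> KC_adj p i j -> M i j = 1.
Proof. by move=> h1 h2; rewrite M_off // h2. Qed.

Lemma M_zero i j : i != j -> ~~ KC_adj p i j -> M i j = 0.
Proof. by move=> h1 /negbTE h2; rewrite M_off // h2. Qed.

Lemma S_lt i : (i < c)%N -> S i = 'X - (p'.+2)%:R%:P + p'%:R.
Proof.
move=> hi; rewrite /Sf (bigD1 (Ordinal hi)) //=.
have -> : M i i = 'X - (p'.+2)%:R%:P.
  by rewrite /Mf eqxx /degf /=; case: ifP => //; lia.
congr (_ + _); rewrite (eq_bigr (fun _ => 1)).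
  by rewrite sumr_const cardC1 card_ord.
move=> k hk.
have hik : i != k by apply: contra hk => /eqP e; apply/eqP/val_inj.
by apply: M_one => //; rewrite /KC_adj; have := ltn_ord k; lia.
Qed.

Lemma S_mid i : (c <= i)%N -> (i < p)%N -> S i = c%:R.
Proof.
move=> h1 h2; rewrite /Sf (eq_bigr (fun _ => 1)) ?sumr_const ?card_ord //.
move=> k _; have := ltn_ord k => hk; apply: M_one; first by lia.
by rewrite /KC_adj; lia.
Qed.

Lemma S_hi i : (p <= i)%N -> S i = 0.
Proof.
move=> h1; rewrite /Sf big1 // => k _; have := ltn_ord k => hk; apply: M_zero; first by lia.
by rewrite /KC_adj; lia.
Qed.

Lemma G_lt i j : (i < c)%N -> G i j = if j == i then 'X - (p%:R)%:P else 0.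
Proof.
move=> hi; rewrite /Gf hi mul1r S_lt // S_mid //.
have Mcc : M c c = 'X - (p'.+2)%:R%:P.
  by rewrite /Mf eqxx /degf /=; case: ifP => //; lia.
case: (eqVneq j i) => [->|nji].
  have -> : (i == c) = false by lia.
  rewrite mul0r !addr0 /Mf eqxx.
  have -> : degf p q i = p'.+2 by rewrite /degf /=; case: ifP => //; lia.
  have -> : (c == i) = false by lia.
  have -> : KC_adj p c i by rewrite /KC_adj; lia.
  rewrite !polyC_natr -[p'.+3%:R]natr1 nb0; ring.
case: (eqVneq j c) => [->|njc].
  rewrite !nb1 !mul1r Mcc M_one; last by rewrite /KC_adj; lia.
    rewrite !polyC_natr -[p'.+2%:R]natr1 -[p'.+1%:R]natr1; ring.
  by lia.
rewrite !nb0 !mul0r !addr0.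
case: (ltnP j p) => hj.
  rewrite !M_one //; first (by rewrite subrr); try (by rewrite /KC_adj; lia); lia.
rewrite !M_zero ?subrr //; try (by rewrite /KC_adj; lia); lia.
Qed.

Lemma G_hi i j : (c <= i)%N -> G i j = M i j + (j == c)%:R * S i.
Proof.
by move=> hi; rewrite /Gf (_ : (i < c)%N = false) ?mul0r ?subr0 //; lia.
Qed.

Lemma G_path i j : (p <= i)%N -> (p <= j)%N -> G i j = M i j.
Proof.
move=> hi hj; rewrite G_hi; last by lia.
by rewrite (_ : (j == c) = false) ?nb0 ?mul0r ?addr0 //; lia.
Qed.

Lemma path_det k : (k <= q'.+1)%N ->
  Dm k (fun i j => G (i + (n - k)) (j + (n - k))) = Qp R k.
Proof.
suff H : forall k, (k.+1 <= q'.+1)%N ->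
    Dm k (fun i j => G (i + (n - k)) (j + (n - k))) = Qp R k /\
    Dm k.+1 (fun i j => G (i + (n - k.+1)) (j + (n - k.+1))) = Qp R k.+1.
  by case: k => [|k] hk; [case: (H 0%N _) | case: (H k hk)].
clear k; elim=> [|k IH] hk.
  split; first by rewrite /Dm det_mx00.
  rewrite /Dm det_mx11 mxE /= G_path; try lia.
  rewrite /Mf eqxx /degf.
  have -> : (0 + (n - 1) < p'.+2)%N = false by lia.
  have -> : (0 + (n - 1) == p'.+2)%N = false by lia.
  have -> : (0 + (n - 1) == (p + q).-2)%N = true by lia.
  by rewrite polyC1.
have [IH0 IH1] := IH (ltnW hk); split => //.
have e1 : forall x, (x.+1 + (n - k.+2) = x + (n - k.+1))%N by move=> x; lia.
have e2 : forall x, (x.+2 + (n - k.+2) = x + (n - k))%N by move=> x; lia.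
rewrite Dm_tri; first last.
- move=> i hi; rewrite G_path; try lia.
  by apply: M_zero; [lia | rewrite /KC_adj; lia].
- move=> j hj; rewrite G_path; try lia.
  by apply: M_zero; [lia | rewrite /KC_adj; lia].
under Dm_ext => i j _ _ do rewrite !e1.
under [X in _ - _ * X]Dm_ext => i j _ _ do rewrite !e2.
rewrite IH0 IH1 QpSS.
rewrite !G_path; try lia.
rewrite [M (0 + _) (1 + _)]M_one; [|lia|by rewrite /KC_adj; lia].
rewrite [M (1 + _) (0 + _)]M_one; [|lia|by rewrite /KC_adj; lia].
rewrite /Mf eqxx /degf.
have -> : (0 + (n - k.+2) < p'.+2)%N = false by lia.
have -> : (0 + (n - k.+2) == p'.+2)%N = false by lia.
have -> : (0 + (n - k.+2) == (p + q).-2)%N = false by lia.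
by rewrite !mul1r.
Qed.


Theorem charKC_aux : char_poly (KC_laplacian R p q) =
  ('X - (p%:R)%:P) ^+ c *
  (('X - 1%:P) * (('X - (p%:R)%:P) * Qp R q'.+1 - Qp R q') - (p%:R - 1)%:P * Qp R q'.+1).
Proof.
rewrite char_G (_ : n = c + q'.+3)%N; last lia.
rewrite (@Dm_strip _ c q'.+3 _ ('X - (p%:R)%:P)); last by move=> i j hi; rewrite G_lt.
congr (_ * _).
rewrite Dm_tri; first last.
- move=> i hi; rewrite G_hi; last lia.
  rewrite S_hi; last lia.
  by rewrite mulr0 addr0; apply: M_zero; [lia | rewrite /KC_adj; lia].
- move=> j hj; rewrite G_hi; last lia.
  rewrite (_ : (j + c == c) = false) ?nb0 ?mul0r ?addr0; last lia.
  by apply: M_zero; [lia | rewrite /KC_adj; lia].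
rewrite Dm_tri; first last.
- move=> i hi; rewrite G_hi; last lia.
  rewrite (_ : (1 + c == c) = false) ?nb0 ?mul0r ?addr0; last lia.
  by apply: M_zero; [lia | rewrite /KC_adj; lia].
- move=> j hj; rewrite G_hi; last lia.
  rewrite (_ : (j.+1 + c == c) = false) ?nb0 ?mul0r ?addr0; last lia.
  by apply: M_zero; [lia | rewrite /KC_adj; lia].
have e1 : forall x, (x.+2 + c = x + (n - q'.+1))%N by move=> x; lia.
have e2 : forall x, (x.+3 + c = x + (n - q'))%N by move=> x; lia.
under Dm_ext => i j _ _ do rewrite !e1.
under [Dm q' _]Dm_ext => i j _ _ do rewrite !e2.
rewrite !path_det ?leqnn ?leqnSn //.
rewrite !G_hi; try lia.
have h0 : (0 + c == c) = true by lia.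
have h1 : (1 + c == c) = false by lia.
have h2 : (2 + c == c) = false by lia.
rewrite h0 h1 h2 nb0 nb1 !mul0r !addr0 !mul1r.
rewrite !S_mid; try lia.
rewrite [M (1 + c) (2 + c)]M_one; [|lia|by rewrite /KC_adj; lia].
rewrite [M (2 + c) (1 + c)]M_one; [|lia|by rewrite /KC_adj; lia].
rewrite [M (0 + c) (1 + c)]M_one; [|lia|by rewrite /KC_adj; lia].
rewrite [M (1 + c) (0 + c)]M_one; [|lia|by rewrite /KC_adj; lia].
rewrite /Mf !eqxx /degf.
have -> : (1 + c < p'.+2)%N = false by lia.
have -> : (1 + c == p'.+2)%N = true by lia.
have -> : (0 + c < p'.+2)%N = true by lia.
rewrite !polyC_natr polyCB polyC1 polyC_natr.
rewrite -[p'.+3%:R]natr1 -[p'.+2%:R]natr1 -[p'.+1%:R]natr1.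
ring.
Qed.

End Main2.

Unset Implicit Arguments.

Theorem proposition8 (R : rcfType) (p q : nat) (hp : (3 <= p)%N) (hq : (2 <= q)%N) :
  exists (lam : R) (s : seq R),
    [/\ p%:R < lam <= p%:R + 2,
        lam \notin s,
        size s = q,
        all (fun x => 0 <= x <= 4) s &
        count_mem 0 s = 1%N] /\
        char_poly (KC_laplacian R p q)
          = ('X - (p%:R)%:P) ^+ (p - 2) * ('X - lam%:P) * \prod_(x <- s) ('X - x%:P).
Proof.
case: p hp => [|[|[|p']]] // hp.
case: q hq => [|[|q']] // hq.
have E : char_poly (KC_laplacian R p'.+3 q'.+2) =
         ('X - (p'.+3%:R)%:P) ^+ p'.+1 * fp R p'.+3 q' by exact: charKC_aux.
case: (boolP ((4 <= p'.+3)%N || (1 <= q')%N)) => hpm.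
  have [lam [s [[H1 H2 H3 H4 H5] Ef]]] := @f_roots R p'.+3 q' hp hpm.
  exists lam, s; split; first by split.
  by rewrite E Ef mulrA.
have [e1 e2] : p' = 0%N /\ q' = 0%N by move: hpm; clear; lia.
subst p' q'.
exists 4, [:: 0; 1]; split.
  split => //=.
  - by apply/andP; split; lra.
  - by rewrite !inE; apply/negP => /orP[] /eqP; lra.
  - by rewrite lexx !ler01 /=; apply/andP; split; lra.
  - by rewrite /= eqxx oner_eq0.
by rewrite E f_special mulrA.
Qed.
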